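(* Let $p\in[1,\infty)$ and $\zeta\in M_p^{n-1}$. If $u_k,u\in\mathrm{Conv}_{\mathrm{coe}}^{(n)}(\mathbb{R}^n)$ are such that $\delta_{\zeta,p}(u_k,u)\to 0$, then $u_k(x_0)\to u(x_0)$ as $k\to\infty$ for every $x_0\in\mathrm{int}\,\mathrm{dom}\,u$.
   Context: $\mathrm{Conv}_{\mathrm{coe}}^{(n)}(\mathbb{R}^n)$ is the set of proper, lower semicontinuous, convex, coercive $u:\mathbb{R}^n\to\mathbb{R}\cup\{+\infty\}$ with $\mathrm{dom}\,u=\{u<+\infty\}$ of dimension $n$. $M_p^{n-1}$ is the set of continuous, strictly decreasing $\zeta:\mathbb{R}\to(0,\infty)$ with $\int_0^\infty\zeta(t)^pt^{n-1}dt<\infty$. $\delta_{\zeta,p}(u,v)=\left(\int_{\mathbb{R}^n}|\zeta(u(x))-\zeta(v(x))|^pdx\right)^{1/p}$ with $\zeta(+\infty):=0$. *)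

(* Defs.v *)
From HB Require Import structures.
From mathcomp Require Import all_boot all_order all_algebra.
From mathcomp Require Import all_classical all_reals all_analysis.
Set Implicit Arguments. Unset Strict Implicit. Unset Printing Implicit Defensive.
Import Order.TTheory GRing.Theory Num.Theory.
Import numFieldNormedType.Exports.
Local Open Scope classical_set_scope.
Local Open Scope ring_scope.

Section Defs.
Context {R : realType}.

Definition edom (n : nat) (u : 'rV[R]_n -> \bar R) : set 'rV[R]_n :=
  [set x | (u x < +oo)%E].

(* Affine dimension of A equals n: A contains n+1 affinely independent
   points (i.e. the affine hull of A is all of R^n). *)
Definition affdim_full (n : nat) (A : set 'rV[R]_n) : Prop :=
  exists x : 'I_n.+1 -> 'rV[R]_n,
    (forall i, A (x i)) /\
    row_free (\matrix_(i < n) (x (lift ord0 i) - x ord0)).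

Definition convex_fun (n : nat) (u : 'rV[R]_n -> \bar R) : Prop :=
  forall (x y : 'rV[R]_n) (l : R), 0 < l < 1 ->
    (u ((1 - l) *: x + l *: y)%R <= (1 - l)%:E * u x + l%:E * u y)%E.

Definition coercive (n : nat) (u : 'rV[R]_n -> \bar R) : Prop :=
  forall M : R, exists r : R, forall x : 'rV[R]_n, r < `|x| -> (M%:E < u x)%E.

Definition Conv_coe (n : nat) (u : 'rV[R]_n -> \bar R) : Prop :=
  [/\ (forall x, u x != -oo%E),
      (exists x, u x != +oo%E),
      lower_semicontinuous u &
  [/\
      convex_fun u,
      coercive u
    & affdim_full (edom u)]].

Definition M_p (p : R) (n : nat) (zeta : R -> R) : Prop :=
  [/\ continuous zeta,
      (forall s t, s < t -> zeta t < zeta s),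
      (forall t, 0 < zeta t)
    & (\int[(@lebesgue_measure R)]_(t in [set t : R | (0 <= t)%R])
         ((zeta t `^ p) * t ^+ (n - 1))%R%:E < +oo)%E].

Definition zeta_ext (zeta : R -> R) (e : \bar R) : R :=
  match e with
  | EFin r => zeta r
  | _ => 0
  end.

(* Lebesgue integral over R^n of a nonnegative function, written as the
   iterated one-dimensional Lebesgue integral (Tonelli). *)
Fixpoint int_Rn (n : nat) : ('rV[R]_n -> \bar R) -> \bar R :=
  match n return ('rV[R]_n -> \bar R) -> \bar R with
  | 0 => fun f => f 0
  | k.+1 => fun f =>
      (\int[(@lebesgue_measure R)]_(t in [set: R])
         int_Rn (fun y : 'rV[R]_k => f (row_mx (\row_(i < 1) t) y)))%E
  end.

Definition delta (zeta : R -> R) (p : R) (n : nat)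
    (u v : 'rV[R]_n -> \bar R) : \bar R :=
  poweR (int_Rn (fun x => (`|zeta_ext zeta (u x) - zeta_ext zeta (v x)| `^ p)%R%:E))
        p^-1.

End Defs.

(* Main.v *)
Require Import Defs.
From HB Require Import structures.
From mathcomp Require Import all_boot all_order all_algebra.
From mathcomp Require Import all_classical all_reals all_analysis.
From mathcomp Require Import ring lra.
Import Order.TTheory GRing.Theory Num.Theory.
Import numFieldNormedType.Exports.
Local Open Scope classical_set_scope.
Local Open Scope ring_scope.

Import HBNNSimple.

Lemma int_lb1 (R : realType) (f : R -> \bar R) (a h c : R) :
  0 <= c -> 0 <= h -> (forall x, (0 <= f x)%E) ->
  (forall x, a <= x <= a + h -> (c%:E <= f x)%E) ->
  ((c * h)%:E <= \int[(@lebesgue_measure R)]_(x in [set: R]) f x)%E.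
Proof.
move=> c0 h0 f0 fc.
have mA : @measurable _ (measurableTypeR R) [set` `[a, a+h]] by exact: measurable_itv.
rewrite ge0_integralTE //.
apply: le_trans (ereal_sup_ubound _); last first.
  exists (scale_nnsfun (@indic_nnsfun _ (measurableTypeR R) R _ mA) c0); last reflexivity; move=> x.
  rewrite /= /measurable_realfun.mindic /indic.
  case: (boolP (_ \in _)) => [xin|xout] /=.
    by rewrite mulr1; apply: fc; move: xin; rewrite inE /= in_itv.
  by rewrite mulr0 f0.
rewrite (_ : sintegral _ _ = sintegral (@lebesgue_measure R) (cst c \* (indic_nnsfun R mA))%R) //.
rewrite sintegralrM sintegral_indic. rewrite [X in (_ * X)%E](lebesgue_measure_itv `[a, a+h]) /= lte_fin.
have [h0'|] := ltrP a (a + h).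
  by rewrite -EFinD addrAC subrr add0r.
by rewrite gerDl => hle; have -> : h = 0 by apply/le_anti; rewrite hle h0.
Qed.


Lemma int_Rn_ge0 (R : realType) n (f : 'rV[R]_n -> \bar R) :
  (forall x, (0 <= f x)%E) -> (0 <= int_Rn f)%E.
Proof.
elim: n f => [|k IH] f f0 /=; first exact: f0.
apply: integral_ge0 => t _; exact: IH.
Qed.

Lemma int_Rn_box (R : realType) n (f : 'rV[R]_n -> \bar R) (lo : 'rV[R]_n) (h c : R) :
  0 <= c -> 0 <= h -> (forall x, (0 <= f x)%E) ->
  (forall x : 'rV[R]_n, (forall i, lo 0 i <= x 0 i <= lo 0 i + h) -> (c%:E <= f x)%E) ->
  ((c * h ^+ n)%:E <= int_Rn f)%E.
Proof.
elim: n f lo => [|k IH] f lo c0 h0 f0 fc /=.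
  by rewrite expr0 mulr1; apply: fc => -[].
rewrite exprSr mulrA; apply: (@int_lb1 _ _ (lo 0 0)) => //.
- by rewrite mulr_ge0 // exprn_ge0.
- by move=> t; apply: int_Rn_ge0.
move=> t tI; apply: (IH _ (rsubmx (lo : 'M[R]_(1, 1 + k)))) => //.
move=> y yI; apply: fc => i.
case: (split_ordP (i : 'I_(1 + k))) => j ->.
  rewrite (ord1 j) (@row_mxEl R 1 1 k) mxE.
  have -> : lshift k (0 : 'I_1) = 0 by apply: val_inj.
  exact: tI.
rewrite (@row_mxEr R 1 1 k); move: (yI j); rewrite mxE //.
Qed.


Lemma delta_lb (R : realType) n (zeta : R -> R) (p : R) (v u : 'rV[R]_n -> \bar R)
  (lo : 'rV[R]_n) (h c : R) :
  0 < p -> 0 < c -> 0 <= h ->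
  (forall x : 'rV[R]_n, (forall i, lo 0 i <= x 0 i <= lo 0 i + h) ->
     c <= `|zeta_ext zeta (v x) - zeta_ext zeta (u x)|) ->
  ((((c `^ p) * h ^+ n) `^ p^-1)%:E <= delta zeta p v u)%E.
Proof.
move=> p0 c0 h0 hc; rewrite /delta.
have I := @int_Rn_box R n (fun x => (`|zeta_ext zeta (v x) - zeta_ext zeta (u x)| `^ p)%:E)
  lo h (c `^ p) (powR_ge0 _ _) h0.
have {I} : (((c `^ p) * h ^+ n)%:E <= int_Rn (fun x => (`|zeta_ext zeta (v x) - zeta_ext zeta (u x)| `^ p)%:E))%E.
  apply: I; first by move=> x; rewrite lee_fin powR_ge0.
  move=> x xI; rewrite lee_fin; apply: ge0_ler_powR.
  - exact: ltW.
  - by rewrite qualifE /= ltW.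
  - by rewrite qualifE /=.
  - exact: hc.
case: (int_Rn _) => [r| |] //.
- rewrite poweR_EFin !lee_fin => cr; apply: ge0_ler_powR => //.
  + by rewrite invr_ge0 ltW.
  + by rewrite qualifE /= mulr_ge0 ?powR_ge0 ?exprn_ge0.
  + by rewrite qualifE /= (le_trans _ cr) // mulr_ge0 ?powR_ge0 ?exprn_ge0.
- by move=> _; rewrite /poweR invr_eq0 gt_eqF // leey.
Qed.


Lemma jensen (R : realType) n (f : 'rV[R]_n -> \bar R) (I : Type) (s : seq I)
  (d : I -> 'rV[R]_n) (w : I -> R) (x0 : 'rV[R]_n) (a b : R) :
  convex_fun f -> (f x0 <= a%:E)%E -> (forall i, (f (x0 + d i)%R <= b%:E)%E) ->
  (forall i, 0 <= w i) -> \sum_(i <- s) w i < 1 ->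
  (f (x0 + \sum_(i <- s) w i *: d i)%R <= (a + (\sum_(i <- s) w i) * (b - a))%:E)%E.
Proof.
move=> cf fa fb w0; elim: s w w0 => [|j s IH] w w0.
  by rewrite !big_nil addr0 mul0r addr0.
rewrite !big_cons => Ws.
have W'0 : 0 <= \sum_(i <- s) w i by apply: sumr_ge0.
have [th0|thp] := eqVneq (w j) 0.
  rewrite th0 scale0r !add0r; apply: IH => //.
  by move: Ws; rewrite th0 add0r.
have th1 : w j < 1 by apply: le_lt_trans Ws; rewrite lerDl.
have thpos : 0 < w j by rewrite lt_neqAle eq_sym thp w0.
have e0 : 1 - w j != 0 by rewrite subr_eq0 gt_eqF.
set W' := \sum_(i <- s) w i in Ws W'0 *.
pose w' i := w i / (1 - w j).
have w'0 i : 0 <= w' i by rewrite /w' divr_ge0 // subr_ge0 ltW.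
have Hs : \sum_(i <- s) w' i = W' / (1 - w j) by rewrite /w' -mulr_suml.
have IH' := IH w' w'0.
rewrite Hs in IH'.
have Hlt : W' / (1 - w j) < 1.
  rewrite ltr_pdivrMr ?subr_gt0 // mul1r. lra.
have {IH'} IH' := IH' Hlt.
set y := x0 + \sum_(i <- s) w' i *: d i in IH'.
have -> : x0 + (w j *: d j + \sum_(i <- s) w i *: d i) =
    (1 - w j) *: y + w j *: (x0 + d j).
  rewrite /y scalerDr scaler_sumr.
  have -> : \sum_(i <- s) (1 - w j) *: (w' i *: d i) = \sum_(i <- s) w i *: d i.
    by apply: eq_bigr => i _; rewrite scalerA /w' mulrCA divff // mulr1.
  rewrite scalerDr scalerBl scale1r.
  rewrite -!addrA; congr (_ + _); rewrite [RHS]addrCA addKr addrC //.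
apply: le_trans (cf _ _ (w j) _) _; first by rewrite thpos th1.
apply: le_trans (leeD (lee_wpmul2l _ IH') (lee_wpmul2l _ (fb j))) _.
- by rewrite lee_fin subr_ge0 ltW.
- by rewrite lee_fin ltW.
rewrite -!EFinM -EFinD lee_fin le_eqVlt; apply/orP; left; apply/eqP.
by field.
Qed.


Definition cvxset (R : realType) n (S : set 'rV[R]_n) :=
  forall a b (l : R), S a -> S b -> 0 < l < 1 -> S ((1 - l) *: a + l *: b).

Arguments cvxset {R n}.

Lemma row1_comb (R : realType) (t1 t2 l : R) :
  (1 - l) *: (\row_(_ < 1) t1) + l *: (\row_(_ < 1) t2) =
  \row_(_ < 1) ((1 - l) * t1 + l * t2) :> 'rV[R]_1.
Proof. by apply/rowP => i; rewrite !mxE. Qed.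

Lemma convex_slice (R : realType) k (S : set 'rV[R]_k.+1) (P : R -> bool) :
  cvxset S -> (forall t1 t2 l, P t1 -> P t2 -> 0 < l < 1 -> P ((1 - l) * t1 + l * t2)) ->
  cvxset (fun y : 'rV[R]_k => exists t, P t /\ S (row_mx (\row_(_ < 1) t) y)).
Proof.
move=> cS cP a b l [t1 [P1 S1]] [t2 [P2 S2]] l01.
exists ((1 - l) * t1 + l * t2); split; first exact: cP.
have := cS _ _ l S1 S2 l01.
by rewrite !(@scale_row_mx R 1 1 k) (@add_row_mx R 1 1 k) row1_comb.
Qed.

Lemma orthant (R : realType) n (S : set 'rV[R]_n) :
  cvxset S -> ~ S 0 ->
  exists sg : 'I_n -> bool, forall v : 'rV[R]_n, (forall i, 0 <= v 0 i) ->
    ~ S (\row_i (if sg i then v 0 i else - v 0 i)).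
Proof.
elim: n S => [|k IH] S cS S0.
  by exists (fun _ => true) => v _; rewrite thinmx0.
pose Sp := fun y : 'rV[R]_k => exists t, (0 <= t) /\ S (row_mx (\row_(_ < 1) t) y).
pose Sm := fun y : 'rV[R]_k => exists t, (t <= 0) /\ S (row_mx (\row_(_ < 1) t) y).
have cSp : cvxset Sp.
  apply: (@convex_slice R k S (fun t => 0 <= t)) => // t1 t2 l p1 p2 /andP[l0 l1].
  by nra.
have cSm : cvxset Sm.
  apply: (@convex_slice R k S (fun t => t <= 0)) => // t1 t2 l p1 p2 /andP[l0 l1].
  by nra.
have key : forall (b : bool) (Q : set 'rV[R]_k),
    (forall y, Q y <-> exists t, (if b then 0 <= t else t <= 0) /\ S (row_mx (\row_(_ < 1) t) y)) ->
    ~ Q 0 -> exists sg : 'I_k.+1 -> bool, forall v : 'rV[R]_k.+1, (forall i, 0 <= v 0 i) ->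
    ~ S (\row_i (if sg i then v 0 i else - v 0 i)).
  move=> b Q HQ Q0.
  have cQ : cvxset Q.
    move=> a c l Qa Qc l01; apply/HQ.
    have [cb _] : cvxset (fun y => exists t, (if b then 0 <= t else t <= 0) /\ S (row_mx (\row_(_ < 1) t) y)) /\ True.
      split => //; apply: (@convex_slice R k S (fun t => if b then 0 <= t else t <= 0)) => //.
      move=> t1 t2 l' p1 p2 /andP[l0 l1]; case: b p1 p2 HQ => p1 p2 _.
        by nra.
      by nra.
    by apply: cb => //; apply/HQ.
  have [sg' Hsg'] := IH Q cQ Q0.
  exists (fun i : 'I_(1 + k) => if fintype.split i is inr j then sg' j else b) => v v0 Sv.
  apply: (Hsg' (rsubmx (v : 'M[R]_(1, 1 + k)))).
    by move=> i; rewrite mxE.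
  apply/HQ; exists (if b then v 0 0 else - v 0 0); split.
    by case: b {HQ Sv}; rewrite ?oppr_le0 v0.
  move: Sv; congr S; apply/rowP => i; rewrite mxE.
  case: (split_ordP (i : 'I_(1 + k))) => j ->.
    rewrite (@row_mxEl R 1 1 k) (ord1 j) mxE /=.
    have -> : lshift k (0 : 'I_1) = 0 by apply: val_inj.
    by [].
  by rewrite (@row_mxEr R 1 1 k) !mxE.
have [Sp0|Sp0] := pselect (Sp 0).
  have [Sm0|Sm0] := pselect (Sm 0).
    exfalso; apply: S0.
    move: Sp0 Sm0 => [t1 [t10 S1]] [t2 [t20 S2]].
    have [e1|t1n] := eqVneq t1 0.
      by rewrite e1 in S1; move: S1; congr S; apply/rowP => i; rewrite !mxE; case: (@fintype.split 1 k i) => j; rewrite !mxE.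
    have [e2|t2n] := eqVneq t2 0.
      by rewrite e2 in S2; move: S2; congr S; apply/rowP => i; rewrite !mxE; case: (@fintype.split 1 k i) => j; rewrite !mxE.
    have t1p : 0 < t1 by rewrite lt_neqAle eq_sym t1n.
    have t2n' : t2 < 0 by rewrite lt_neqAle t2n.
    have := cS _ _ (t1 / (t1 - t2)) S1 S2.
    rewrite !(@scale_row_mx R 1 1 k) (@add_row_mx R 1 1 k) row1_comb !scaler0 addr0.
    have -> : (1 - t1 / (t1 - t2)) * t1 + t1 / (t1 - t2) * t2 = 0.
      by field; rewrite subr_eq0 gt_eqF // (lt_trans t2n').
    have -> : row_mx (\row_(_ < 1) (0 : R)) (0 : 'rV[R]_k) = 0.
      by apply/rowP => i; rewrite !mxE; case: (@fintype.split 1 k i) => j; rewrite !mxE.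
    apply; apply/andP; split.
      by rewrite divr_gt0 // subr_gt0 (lt_trans t2n').
    by rewrite ltr_pdivrMr ?subr_gt0 ?(lt_trans t2n') // mul1r; lra.
  by apply: (key false Sm).
by apply: (key true Sp).
Qed.


Lemma ball_rV (R : realType) n (y z : 'rV[R]_n) (e : R) :
  0 < e -> (forall j, `|y 0 j - z 0 j| < e) -> ball y e z.
Proof.
move=> e0 H; split => // i j; rewrite (ord1 i) -ball_normE /=; exact: H.
Qed.

Lemma ball_rV_inv (R : realType) n (y z : 'rV[R]_n) (e : R) :
  ball y e z -> forall j, `|y 0 j - z 0 j| < e.
Proof.
by move=> [_ H] j; have := H 0 j; rewrite -ball_normE.
Qed.

Lemma zeta_ext_ge (R : realType) (zeta : R -> R) (e : \bar R) (a : R) :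
  (forall s t, s < t -> zeta t < zeta s) -> e != -oo%E -> (e <= a%:E)%E ->
  zeta a <= zeta_ext zeta e.
Proof.
move=> zd; case: e => [r| |] //= _; rewrite ?leey_eq //.
rewrite lee_fin le_eqVlt => /predU1P[->//|/zd/ltW//].
Qed.

Lemma zeta_ext_le (R : realType) (zeta : R -> R) (e : \bar R) (a : R) :
  (forall s t, s < t -> zeta t < zeta s) -> (forall t, 0 < zeta t) -> (a%:E < e)%E ->
  zeta_ext zeta e <= zeta a.
Proof.
move=> zd zp; case: e => [r| |] //=; first by rewrite lte_fin => /zd/ltW.
by move=> _; exact: ltW.
Qed.

Lemma delta_ev (R : realType) n (zeta : R -> R) (p : R)
  (u_ : nat -> 'rV[R]_n -> \bar R) (u : 'rV[R]_n -> \bar R) (eta : R) :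
  delta zeta p (u_ k) u @[k --> \oo] --> 0%E -> 0 < eta ->
  \forall k \near \oo, (delta zeta p (u_ k) u < eta%:E)%E.
Proof.
move=> /fine_cvgP[Hfin /cvgrPdist_lt Hc] eta0.
have := Hc _ eta0; apply: filterS2 Hfin => k fk.
rewrite sub0r normrN /= => H.
by rewrite -(fineK fk) lte_fin (le_lt_trans (ler_norm _) H).
Qed.


Lemma box_param (R : realType) n (y : 'rV[R]_n) (sg : 'I_n -> bool) (h : R) (x : 'rV[R]_n) :
  (forall i, (\row_j (if sg j then y 0 j else y 0 j - h)) 0 i <= x 0 i <=
             (\row_j (if sg j then y 0 j else y 0 j - h)) 0 i + h) ->
  exists v : 'rV[R]_n, (forall i, 0 <= v 0 i <= h) /\
    x = y + \row_i (if sg i then v 0 i else - v 0 i).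
Proof.
move=> xI.
exists (\row_i (if sg i then x 0 i - y 0 i else y 0 i - x 0 i)); split.
  move=> i; have := xI i; rewrite !mxE; case: (sg i) => /andP[h1 h2]; apply/andP; split; lra.
apply/rowP => i; rewrite !mxE; case: (sg i); rewrite ?opprB; lra.
Qed.

Lemma box_jensen (R : realType) n (f : 'rV[R]_n -> \bar R) (y : 'rV[R]_n)
  (r h a b : R) (sg : 'I_n -> bool) (v : 'rV[R]_n) :
  convex_fun f -> 0 < r -> (f y <= a%:E)%E ->
  (forall i (s : bool), (f (y + (if s then r else - r) *: delta_mx 0 i)%R <= b%:E)%E) ->
  (forall i, 0 <= v 0 i <= h) -> n%:R * h / r < 1 ->
  (f (y + \row_i (if sg i then v 0 i else - v 0 i))%R <= (a + (n%:R * h / r) * `|b - a|)%:E)%E.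
Proof.
move=> cf r0 fa fb vI Hlt.
pose d i := (if sg i then r else - r) *: (delta_mx 0 i : 'rV[R]_n).
pose w i := v 0 i / r.
have w0 i : 0 <= w i by case/andP: (vI i) => v0 _; rewrite /w divr_ge0 // ltW.
have Wle : \sum_(i < n) w i <= n%:R * h / r.
  rewrite /w -mulr_suml ler_pM2r ?invr_gt0 //.
  apply: le_trans (ler_sum _ (fun i _ => proj2 (andP (vI i)))) _.
  by rewrite sumr_const card_ord mulr_natl.
have Wlt : \sum_(i < n) w i < 1 by apply: le_lt_trans Wle Hlt.
have := @jensen R n f 'I_n (index_enum 'I_n) d w y a b cf fa (fun i => fb i (sg i)) w0 Wlt.
have -> : \row_i (if sg i then v 0 i else - v 0 i) = \sum_(i < n) w i *: d i.
  rewrite [LHS]row_sum_delta; apply: eq_bigr => i _.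
  rewrite /d /w scalerA mxE; congr (_ *: _).
  by case: (sg i); field; rewrite gt_eqF.
move/le_trans; apply; rewrite lee_fin lerD2l.
have W0 : 0 <= \sum_(i < n) w i by apply: sumr_ge0.
apply: le_trans (ler_wpM2l W0 (ler_norm _)) _.
by apply: ler_wpM2r.
Qed.


Lemma upperA (R : realType) n (zeta : R -> R) (p : R)
  (u_ : nat -> 'rV[R]_n -> \bar R) (u : 'rV[R]_n -> \bar R) (y : 'rV[R]_n) (r0 : R) :
  0 < p -> (forall s t, s < t -> zeta t < zeta s) -> (forall t, 0 < zeta t) ->
  convex_fun u -> (forall x, u x != -oo%E) -> (forall k, convex_fun (u_ k)) ->
  0 < r0 -> ball y r0 `<=` edom u ->
  delta zeta p (u_ k) u @[k --> \oo] --> 0%E ->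
  forall eps, 0 < eps -> \forall k \near \oo, (u_ k y < (fine (u y) + eps)%:E)%E.
Proof.
move=> p0 zd zp cu uN cuk r00 Hball Hd eps eps0.
have finE : forall x, ball y r0 x -> u x = (fine (u x))%:E.
  move=> x /Hball; rewrite /edom /= => ux.
  by rewrite fineK // fin_numE uN lt_eqF.
have uyE := finE y (ballxx _ r00).
set Ly := fine (u y) in uyE *.
pose r := r0 / 2.
have r0' : 0 < r by rewrite divr_gt0.
pose vert (s : bool) i := y + (if s then r else - r) *: (delta_mx 0 i : 'rV[R]_n).
have vball s i : ball y r0 (vert s i).
  apply: ball_rV => // j; rewrite /vert !mxE opprD addrA subrr sub0r normrN normrM.
  have : `|(((0 : 'I_1) == 0) && (j == i))%:R : R| <= 1.
    by case: (_ && _); rewrite ?normr1 ?normr0.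
  have -> : `|(if s then r else - r)| = r by case: s; rewrite ?normrN gtr0_norm.
  move=> H; apply: le_lt_trans (ler_wpM2l (ltW r0') H) _; rewrite mulr1 /r; lra.
pose b := \big[Num.max/Ly]_(i < n) Num.max (fine (u (vert true i))) (fine (u (vert false i))).
have vb s i : (u (vert s i) <= b%:E)%E.
  rewrite (finE _ (vball s i)) lee_fin; apply: le_trans (le_bigmax _ _ i).
  by case: s; rewrite le_max lexx ?orbT.
pose lam := Num.min (1 / 2) (eps / (4 * (`|b - Ly| + 1))).
have bpos : 0 < 4 * (`|b - Ly| + 1) :> R by have := normr_ge0 (b - Ly); lra.
have n1pos : 0 < n%:R + 1 :> R by have : 0 <= n%:R :> R by []; lra.
have lam0 : 0 < lam by rewrite lt_min; apply/andP; split; [lra | exact: divr_gt0].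
have lam12 : lam <= 1 / 2 by rewrite ge_min lexx.
have lame : lam * (4 * (`|b - Ly| + 1)) <= eps.
  rewrite -ler_pdivlMr //.
  by rewrite ge_min lexx orbT.
pose h := r * lam / (n%:R + 1).
have h0 : 0 < h by rewrite /h divr_gt0 ?mulr_gt0.
have nhr : n%:R * h / r = lam * (n%:R / (n%:R + 1)).
  by rewrite /h; field; rewrite !gt_eqF.
have nn1 : n%:R / (n%:R + 1) <= 1 :> R.
  by rewrite ler_pdivrMr // mul1r lerDl.
have nn0 : 0 <= n%:R / (n%:R + 1) :> R by rewrite divr_ge0 // addr_ge0.
have Hlt : n%:R * h / r < 1.
  by rewrite nhr; apply: le_lt_trans (ler_piMr (ltW lam0) nn1) _; lra.
have Hb : n%:R * h / r * `|b - Ly| <= eps / 4.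
  rewrite nhr; have nb : 0 <= `|b - Ly| by [].
  have : lam * (n%:R / (n%:R + 1)) <= lam by rewrite ler_piMr // ltW.
  move=> H; apply: le_trans (ler_wpM2r nb H) _; nra.
have ubox : forall (sg : 'I_n -> bool) (v : 'rV[R]_n), (forall i, 0 <= v 0 i <= h) ->
    (u (y + \row_i (if sg i then v 0 i else - v 0 i))%R <= (Ly + eps / 4)%:E)%E.
  move=> sg v vI.
  have := @box_jensen R n u y r h Ly b sg v cu r0' _ (fun i s => vb s i) vI Hlt.
  rewrite uyE lexx => /(_ isT) /le_trans; apply; rewrite lee_fin lerD2l //.
pose c := zeta (Ly + eps / 4) - zeta (Ly + eps / 2).
have c0 : 0 < c by rewrite subr_gt0 zd // ltrD2l; lra.
pose eta := (c `^ p * h ^+ n) `^ p^-1.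
have eta0 : 0 < eta by rewrite powR_gt0 // mulr_gt0 ?powR_gt0 ?exprn_gt0.
apply: filterS (@delta_ev R n zeta p u_ u eta Hd eta0) => k Hk.
rewrite ltNge; apply/negP => Hge.
pose S := fun v : 'rV[R]_n => (u_ k (y + v)%R <= (Ly + eps / 2)%:E)%E.
have S0 : ~ S 0.
  rewrite /S addr0 => H; have := le_trans Hge H; rewrite lee_fin lerD2l; lra.
have cS : cvxset S.
  move=> a b' l Sa Sb /andP[l0 l1]; rewrite /S.
  have -> : y + ((1 - l) *: a + l *: b') = (1 - l) *: (y + a) + l *: (y + b').
    by rewrite !scalerDr addrACA -scalerDl subrK scale1r.
  apply: le_trans (cuk k _ _ l _) _; first by rewrite l0 l1.
  apply: le_trans (leeD (lee_wpmul2l _ Sa) (lee_wpmul2l _ Sb)) _.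
  - by rewrite lee_fin subr_ge0 ltW.
  - by rewrite lee_fin ltW.
  by rewrite -!EFinM -EFinD lee_fin; lra.
have [sg Hsg] := @orthant R n S cS S0.
pose lo := \row_j (if sg j then y 0 j else y 0 j - h).
have := @delta_lb R n zeta p (u_ k) u lo h c p0 c0 (ltW h0).
have /[swap]/[apply] : forall x : 'rV[R]_n, (forall i, lo 0 i <= x 0 i <= lo 0 i + h) ->
     c <= `|zeta_ext zeta (u_ k x) - zeta_ext zeta (u x)|.
  move=> x /box_param [v [vI ->]].
  have h1 := ubox sg v vI.
  have h2 : ((Ly + eps / 2)%:E < u_ k (y + \row_i (if sg i then v 0 i else - v 0 i))%R)%E.
    rewrite ltNge; apply/negP => H; apply: (Hsg v) => //.
    by move=> i; case/andP: (vI i).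
  have z1 := @zeta_ext_ge R zeta _ _ zd (uN _) h1.
  have z2 := @zeta_ext_le R zeta _ _ zd zp h2.
  rewrite distrC; apply: le_trans (ler_norm _); rewrite /c; lra.
move=> H; have := lt_le_trans Hk H; rewrite ltxx.
by [].
Qed.


Lemma lowerB (R : realType) n (zeta : R -> R) (p : R)
  (u_ : nat -> 'rV[R]_n -> \bar R) (u : 'rV[R]_n -> \bar R) (x0 : 'rV[R]_n) (r2 : R) :
  0 < p -> (forall s t, s < t -> zeta t < zeta s) -> (forall t, 0 < zeta t) ->
  convex_fun u -> (forall x, u x != -oo%E) -> lower_semicontinuous u ->
  (forall k, convex_fun (u_ k)) -> (forall k x, u_ k x != -oo%E) ->
  0 < r2 -> ball x0 r2 `<=` edom u ->
  delta zeta p (u_ k) u @[k --> \oo] --> 0%E ->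
  forall eps, 0 < eps -> \forall k \near \oo, ((fine (u x0) - eps)%:E < u_ k x0)%E.
Proof.
move=> p0 zd zp cu uN lsc cuk ukN r20 Hball Hd eps eps0.
have finE : forall x, ball x0 r2 x -> u x = (fine (u x))%:E.
  move=> x /Hball; rewrite /edom /= => ux.
  by rewrite fineK // fin_numE uN lt_eqF.
have uxE := finE x0 (ballxx _ r20).
set L := fine (u x0) in uxE *.
have [V nV HV] : exists2 V, nbhs x0 V & forall y, V y -> ((L - eps / 2)%:E < u y)%E.
  by apply: lsc; rewrite uxE lte_fin; lra.
case/nbhs_ballP: nV => r1 r10 Hb1.
pose r := Num.min r1 r2 / 2.
have r0' : 0 < r by rewrite divr_gt0 // lt_min r10 r20.
have m1 : Num.min r1 r2 <= r1 by rewrite ge_min lexx.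
have m2 : Num.min r1 r2 <= r2 by rewrite ge_min lexx orbT.
have mpos : 0 < Num.min r1 r2 by rewrite lt_min r10 r20.
have rr1 : r < r1 by rewrite /r; lra.
have r2r : r + r <= r2 by rewrite /r; lra.
pose vert (s : bool) i := x0 + (if s then r else - r) *: (delta_mx 0 i : 'rV[R]_n).
have vdist : forall s i j, `|x0 0 j - vert s i 0 j| <= r.
  move=> s i j; rewrite /vert !mxE opprD addrA subrr sub0r normrN normrM.
  have : `|(((0 : 'I_1) == 0) && (j == i))%:R : R| <= 1.
    by case: (_ && _); rewrite ?normr1 ?normr0.
  have -> : `|(if s then r else - r)| = r by case: s; rewrite ?normrN gtr0_norm.
  move=> H; apply: le_trans (ler_wpM2l (ltW r0') H) _; rewrite mulr1.
  by [].
have vsub : forall s i, ball (vert s i) r `<=` edom u.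
  move=> s i z /ball_rV_inv zb; apply: Hball; apply: ball_rV => // j.
  have -> : x0 0 j - z 0 j = (x0 0 j - vert s i 0 j) + (vert s i 0 j - z 0 j) by rewrite addrA subrK.
  apply: le_lt_trans (ler_normD _ _) _.
  have := vdist s i j; have := zb j; lra.
have vball : forall s i, ball x0 r2 (vert s i).
  move=> s i; apply: ball_rV => // j; have := vdist s i j; lra.
pose b := \big[Num.max/L]_(i < n) Num.max (fine (u (vert true i)) + 1) (fine (u (vert false i)) + 1).
have vev : \forall k \near \oo, forall si : 'I_n * bool, (u_ k (vert si.2 si.1) < b%:E)%E.
  apply: filter_forall => -[i s].
  have := @upperA R n zeta p u_ u (vert s i) r p0 zd zp cu uN cuk r0' (vsub s i) Hd 1 ltr01.
  apply: filterS => k /lt_le_trans; apply; rewrite lee_fin.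
  apply: le_trans (le_bigmax _ _ i).
  by case: s; rewrite le_max lexx ?orbT.
set a := L - eps.
pose lam := Num.min (1 / 2) (eps / (4 * (`|b - a| + 1))).
have bpos : 0 < 4 * (`|b - a| + 1) :> R by have := normr_ge0 (b - a); lra.
have n1pos : 0 < n%:R + 1 :> R by have : 0 <= n%:R :> R by []; lra.
have lam0 : 0 < lam by rewrite lt_min; apply/andP; split; [lra | exact: divr_gt0].
have lam12 : lam <= 1 / 2 by rewrite ge_min lexx.
have lame : lam * (4 * (`|b - a| + 1)) <= eps.
  rewrite -ler_pdivlMr //.
  by rewrite ge_min lexx orbT.
pose h := r * lam / (n%:R + 1).
have h0 : 0 < h by rewrite /h divr_gt0 ?mulr_gt0.
have nhr : n%:R * h / r = lam * (n%:R / (n%:R + 1)).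
  by rewrite /h; field; rewrite !gt_eqF.
have nn1 : n%:R / (n%:R + 1) <= 1 :> R.
  by rewrite ler_pdivrMr // mul1r lerDl.
have nn0 : 0 <= n%:R / (n%:R + 1) :> R by rewrite divr_ge0 // addr_ge0.
have Hlt : n%:R * h / r < 1.
  by rewrite nhr; apply: le_lt_trans (ler_piMr (ltW lam0) nn1) _; lra.
have Hb : n%:R * h / r * `|b - a| <= eps / 4.
  rewrite nhr; have nb : 0 <= `|b - a| by [].
  have : lam * (n%:R / (n%:R + 1)) <= lam by rewrite ler_piMr // ltW.
  move=> H; apply: le_trans (ler_wpM2r nb H) _; nra.
have hr : h < r.
  have : h = r * (lam / (n%:R + 1)) by rewrite /h mulrA.
  move=> ->; rewrite gtr_pMr //.
  rewrite ltr_pdivrMr //; have : 1 <= n%:R + 1 :> R by rewrite lerDr.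
  lra.
pose c := zeta (L - 3 * eps / 4) - zeta (L - eps / 2).
have c0 : 0 < c by rewrite subr_gt0 zd //; lra.
pose eta := (c `^ p * h ^+ n) `^ p^-1.
have eta0 : 0 < eta by rewrite powR_gt0 // mulr_gt0 ?powR_gt0 ?exprn_gt0.
apply: filterS2 (@delta_ev R n zeta p u_ u eta Hd eta0) vev => k Hk Hv.
rewrite ltNge; apply/negP => Hle.
pose sg := fun _ : 'I_n => true.
pose lo := \row_j (if sg j then x0 0 j else x0 0 j - h).
have := @delta_lb R n zeta p (u_ k) u lo h c p0 c0 (ltW h0).
have /[swap]/[apply] : forall x : 'rV[R]_n, (forall i, lo 0 i <= x 0 i <= lo 0 i + h) ->
     c <= `|zeta_ext zeta (u_ k x) - zeta_ext zeta (u x)|.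
  move=> x xI; have [v [vI xE]] := @box_param R n x0 sg h x xI.
  have h1 : (u_ k x <= (L - 3 * eps / 4)%:E)%E.
    rewrite xE.
    have := @box_jensen R n (u_ k) x0 r h a b sg v (cuk k) r0' Hle
      (fun i s => ltW (Hv (i, s))) vI Hlt.
    move/le_trans; apply; rewrite lee_fin /a; lra.
  have h2 : ((L - eps / 2)%:E < u x)%E.
    apply: HV; apply: Hb1; apply: ball_rV => // j.
    rewrite xE !mxE /sg opprD addrA subrr sub0r normrN.
    case/andP: (vI j) => v0 vh; rewrite ger0_norm //; lra.
  have z1 := @zeta_ext_ge R zeta _ _ zd (ukN k x) h1.
  have z2 := @zeta_ext_le R zeta _ _ zd zp h2.
  apply: le_trans (ler_norm _); rewrite /c; lra.
move=> H; have := lt_le_trans Hk H; rewrite ltxx.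
by [].
Qed.


Theorem lemma3p8 (R : realType) (n : nat) (p : R) (zeta : R -> R)
    (u_ : nat -> 'rV[R]_n -> \bar R) (u : 'rV[R]_n -> \bar R) :
  (0 < n)%N -> 1 <= p -> M_p p n zeta ->
  (forall k, Conv_coe (u_ k)) -> Conv_coe u ->
  delta zeta p (u_ k) u @[k --> \oo] --> 0%E ->
  forall x0, (edom u)° x0 ->
    u_ k x0 @[k --> \oo] --> u x0.
Proof.
move=> _ p1 [_ zd zp _] Cuk [uN _ lsc [cu _ _]] Hd x0 xint.
have p0 : 0 < p by apply: lt_le_trans p1.
have cuk k : convex_fun (u_ k) by have [_ _ _ []] := Cuk k.
have ukN k x : u_ k x != -oo%E by have [H _ _ _] := Cuk k; exact: H.
case/nbhs_ballP: xint => r2 r20 Hb2.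
have ux : u x0 = (fine (u x0))%:E.
  have := Hb2 _ (ballxx _ r20); rewrite /edom /= => H.
  by rewrite fineK // fin_numE uN lt_eqF.
set L := fine (u x0) in ux *.
have A := @upperA R n zeta p u_ u x0 r2 p0 zd zp cu uN cuk r20 Hb2 Hd.
have B := @lowerB R n zeta p u_ u x0 r2 p0 zd zp cu uN lsc cuk ukN r20 Hb2 Hd.
rewrite /L in A B; rewrite -/L in A B.
rewrite ux; apply/fine_cvgP; split.
  apply: filterS2 (A 1 ltr01) (B 1 ltr01) => k H1 H2.
  rewrite fin_numE; apply/andP; split.
    by apply/negP => /eqP e; rewrite e in H2.
  by apply/negP => /eqP e; rewrite e in H1.
apply/cvgrPdist_lt => e e0.
apply: filterS2 (A e e0) (B e e0) => k H1 H2 /=.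
have fk : u_ k x0 \is a fin_num.
  rewrite fin_numE; apply/andP; split.
    by apply/negP => /eqP e'; rewrite e' in H2.
  by apply/negP => /eqP e'; rewrite e' in H1.
move: H1 H2; rewrite -(fineK fk) !lte_fin => H1 H2.
rewrite ltr_norml; apply/andP; split; lra.
Qed.
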